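(* Let $A>0$, $\sigma>0$ and integer $K\ge2$. Then $$\mathsf{F}(A,K,\sigma)\ \ge\ R_{\rm OWB}(A,K,\sigma):=\log K-\tfrac12\log\Bigl(\tfrac{2\pi e}{12}\Bigr)-\tfrac12\log\Bigl(1+\tfrac{12(K-1)^2\sigma^2}{A^2}\Bigr).$$
   Context: All logarithms are base 2. $\mathsf{F}(A,K,\sigma)=\max\{\mathsf{F}_1,\mathsf{F}_2,\mathsf{F}_3\}(A,K,\sigma)$ with $\mathsf{F}_1(A,K,\sigma)=\log K-H(\xi_{A,K})-\xi_{A,K}\log(K-1)$, $\xi_{A,K}=\frac{2(K-1)}{K}\mathsf{Q}(\frac{A}{2(K-1)\sigma})$; $\mathsf{F}_2(A,K,\sigma)=\underline{C}(\frac{KA}{K-1},\sigma)-\mathsf{E}(\frac{A}{K-1},\sigma)$; $\mathsf{F}_3(A,K,\sigma)=-\log\bigl(\sum_{i,j=1}^K\frac{\sqrt{e/2}}{K^2}e^{-\frac{(i-j)^2A^2}{4(K-1)^2\sigma^2}}\bigr)$. Here $H(p)$ is the binary entropy function, $\mathsf{Q}$ the standard Gaussian tail function, and for $a>0$: $\underline{C}(a,\sigma)=\frac12\log(1+\frac{a^2}{2\pi e\sigma^2})$, $\overline{C}(a,\sigma)=\min\{\frac12\log(1+\frac{a^2}{4\sigma^2}),\log(1+\frac{a}{\sqrt{2\pi e}\sigma})\}$, $\mathsf{E}(a,\sigma)=\min\{\overline{C}(a,\sigma),\frac12\log(1+\frac{a^2}{12\sigma^2})\}$. *)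

(* Defs.v *)
From Stdlib Require Import Reals.
From Coquelicot Require Import Coquelicot.
Open Scope R_scope.

Definition log2 (x : R) : R := ln x / ln 2.

(* binary entropy function (bits); 0 log 0 = 0 since Stdlib's ln 0 = 0 *)
Definition Hb (p : R) : R := - p * log2 p - (1 - p) * log2 (1 - p).

Definition gauss_pdf (t : R) : R := exp (- t ^ 2 / 2) / sqrt (2 * PI).
Definition Qfun (x : R) : R :=
  RInt_gen gauss_pdf (at_point x) (Rbar_locally p_infty).

Definition C_low (a s : R) : R := / 2 * log2 (1 + a ^ 2 / (2 * PI * exp 1 * s ^ 2)).
Definition C_up (a s : R) : R :=
  Rmin (/ 2 * log2 (1 + a ^ 2 / (4 * s ^ 2)))
       (log2 (1 + a / (sqrt (2 * PI * exp 1) * s))).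
Definition Efun (a s : R) : R :=
  Rmin (C_up a s) (/ 2 * log2 (1 + a ^ 2 / (12 * s ^ 2))).

Definition xi (A : R) (K : nat) (s : R) : R :=
  2 * (INR K - 1) / INR K * Qfun (A / (2 * (INR K - 1) * s)).

Definition F1 (A : R) (K : nat) (s : R) : R :=
  log2 (INR K) - Hb (xi A K s) - xi A K s * log2 (INR K - 1).

Definition F2 (A : R) (K : nat) (s : R) : R :=
  C_low (INR K * A / (INR K - 1)) s - Efun (A / (INR K - 1)) s.

(* sum over i, j = 1..K *)
Definition F3 (A : R) (K : nat) (s : R) : R :=
  - log2 (sum_f_R0 (fun i => sum_f_R0 (fun j =>
        sqrt (exp 1 / 2) / INR K ^ 2 *
        exp (- ((INR (i + 1) - INR (j + 1)) ^ 2 * A ^ 2)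
               / (4 * (INR K - 1) ^ 2 * s ^ 2))) (K - 1)) (K - 1)).

Definition Fbound (A : R) (K : nat) (s : R) : R :=
  Rmax (F1 A K s) (Rmax (F2 A K s) (F3 A K s)).

Definition R_OWB (A : R) (K : nat) (s : R) : R :=
  log2 (INR K) - / 2 * log2 (2 * PI * exp 1 / 12)
  - / 2 * log2 (1 + 12 * (INR K - 1) ^ 2 * s ^ 2 / A ^ 2).

(* Main.v *)
Require Import Defs.
From Stdlib Require Import Reals Lra.
From Coquelicot Require Import Coquelicot.
Open Scope R_scope.

Lemma ln2_pos' : 0 < ln 2.
Proof. rewrite <- ln_1. apply ln_increasing; lra. Qed.

Lemma log2_le x y : 0 < x -> x <= y -> log2 x <= log2 y.
Proof.
  intros. unfold log2. apply Rmult_le_compat_r.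
  left; apply Rinv_0_lt_compat, ln2_pos'.
  destruct H0. left; apply ln_increasing; lra. subst; lra.
Qed.

Lemma log2_mult x y : 0 < x -> 0 < y -> log2 (x * y) = log2 x + log2 y.
Proof. intros. unfold log2. rewrite ln_mult; auto. field. apply Rgt_not_eq, ln2_pos'. Qed.

Theorem mainTheorem3 (A s : R) (K : nat) :
  0 < A -> 0 < s -> (2 <= K)%nat -> Fbound A K s >= R_OWB A K s.
Proof.
  intros HA Hs HK.
  assert (HK2 : 2 <= INR K) by (replace 2 with (INR 2) by (simpl; lra); apply le_INR; auto).
  set (k := INR K) in *.
  assert (Hb : 0 < k - 1) by lra.
  assert (HPI := PI_RGT_0).
  assert (He : 0 < exp 1) by apply exp_pos.
  set (u := A ^ 2 / ((k - 1) ^ 2 * s ^ 2)).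
  assert (Hu : 0 < u) by (unfold u; apply Rdiv_lt_0_compat; [apply pow_lt; lra | apply Rmult_lt_0_compat; apply pow_lt; lra]).
  set (c := 2 * PI * exp 1).
  assert (Hc : 0 < c) by (unfold c; apply Rmult_lt_0_compat; [apply Rmult_lt_0_compat|]; lra).
  assert (EX : (k * A / (k - 1)) ^ 2 / (2 * PI * exp 1 * s ^ 2) = k * k * u / c)
    by (unfold u, c; field; repeat split; try lra; apply pow_nonzero; lra).
  assert (EY : (A / (k - 1)) ^ 2 / (12 * s ^ 2) = u / 12)
    by (unfold u; field; repeat split; try lra; apply pow_nonzero; lra).
  assert (EZ : 12 * (k - 1) ^ 2 * s ^ 2 / A ^ 2 = 12 / u)
    by (unfold u; field; repeat split; try lra; apply pow_nonzero; lra).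
  assert (F2ge : F2 A K s >= R_OWB A K s).
  { unfold F2, R_OWB, C_low, Efun. fold k.
    assert (Hm := Rmin_r (C_up (A / (k - 1)) s) (/ 2 * log2 (1 + (A / (k - 1)) ^ 2 / (12 * s ^ 2)))).
    rewrite EX in *. rewrite EY in *. rewrite EZ. fold c.
    assert (Hmain : log2 (k * k * (1 + u / 12)) <= log2 ((1 + k * k * u / c) * (c / 12) * (1 + 12 / u))).
    { apply log2_le.
      - apply Rmult_lt_0_compat; [nra|]. apply Rplus_lt_0_compat; [lra|]. apply Rdiv_lt_0_compat; lra.
      - assert (E : (1 + k * k * u / c) * (c / 12) * (1 + 12 / u) = k * k * (1 + u / 12) + c / 12 + c / u)
          by (field; split; lra).
        rewrite E. assert (0 < c / u) by (apply Rdiv_lt_0_compat; lra).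
        assert (0 < c / 12) by (apply Rdiv_lt_0_compat; lra). lra. }
    assert (P1 : 0 < 1 + k * k * u / c) by (assert (0 < k * k * u / c) by (apply Rdiv_lt_0_compat; [apply Rmult_lt_0_compat; nra | lra]); lra).
    assert (P2 : 0 < 1 + 12 / u) by (assert (0 < 12 / u) by (apply Rdiv_lt_0_compat; lra); lra).
    assert (P3 : 0 < 1 + u / 12) by (assert (0 < u / 12) by (apply Rdiv_lt_0_compat; lra); lra).
    assert (P4 : 0 < c / 12) by (apply Rdiv_lt_0_compat; lra).
    rewrite !log2_mult in Hmain; try lra; try nra. }
  unfold Fbound.
  assert (H1 := Rmax_r (F1 A K s) (Rmax (F2 A K s) (F3 A K s))).
  assert (H2 := Rmax_l (F2 A K s) (F3 A K s)).
  lra.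
Qed.
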